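(* Let $(A_0,A_1,A_2)$ be an extendable collection of cap sets in $\mathbb{F}_3^n$ with $|A_1|=|A_2|$, and let $S\subseteq\{0,1,2\}^m$ be an admissible set consisting of $\binom{m}{w}$ vectors, each of weight $w$. Then \[|S(A_0,A_1,A_2)| = \binom{m}{w}|A_0|^{m-w}|A_1|^{w}.\]
   Context: A cap set is a set $A \subseteq \mathbb{F}_3^n$ such that the only solutions of $x+y+z=0$ with $x,y,z\in A$ are those with $x=y=z$. Cap sets $A_0,A_1,A_2\subseteq\mathbb{F}_3^n$ form an extendable collection if (1) whenever $x,y\in A_0$ (not necessarily distinct) and $z\in A_1\cup A_2$, $x+y+z\neq 0$; and (2) whenever $x\in A_0$, $y\in A_1$, $z\in A_2$, $x+y+z\neq 0$. A set $S\subseteq\{0,1,2\}^m$ is admissible if (1) for all distinct $s,s'\in S$ there are coordinates $i,j$ with $s_i=0\neq s'_i$ and $s_j\neq 0=s'_j$; and (2) for all distinct $s,s',s''\in S$ there is a coordinate $k$ such that the multiset $\{s_k,s'_k,s''_k\}$ equals $\{0,1,2\}$, $\{0,0,1\}$ or $\{0,0,2\}$. The weight of a vector is its number of nonzero coordinates. For $s\in\{0,1,2\}^m$, $s(A_0,A_1,A_2)=A_{s_1}\times\cdots\times A_{s_m}\subseteq\mathbb{F}_3^{nm}$ and $S(A_0,A_1,A_2)=\bigcup_{s\in S}s(A_0,A_1,A_2)$. *)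

(* Defs.v *)
From HB Require Import structures.
From mathcomp Require Import all_boot all_order all_algebra.
Set Implicit Arguments. Unset Strict Implicit. Unset Printing Implicit Defensive.
Import GRing.Theory.
Local Open Scope ring_scope.

Notation F3vec n := 'rV['F_3]_n.

Definition cap_set (n : nat) (A : {set F3vec n}) : Prop :=
  forall x y z, x \in A -> y \in A -> z \in A -> x + y + z = 0 -> x = y /\ y = z.

Definition extendable (n : nat) (A0 A1 A2 : {set F3vec n}) : Prop :=
  [/\ cap_set A0, cap_set A1, cap_set A2,
      (forall x y z, x \in A0 -> y \in A0 -> z \in A1 :|: A2 -> x + y + z != 0) &
      (forall x y z, x \in A0 -> y \in A1 -> z \in A2 -> x + y + z != 0)].

Notation tvec m := {ffun 'I_m -> 'I_3}.

Definition good_triple (a b c : 'I_3) : bool :=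
  let t := [:: val a; val b; val c] in
  [|| perm_eq t [:: 0%N; 1%N; 2%N], perm_eq t [:: 0%N; 0%N; 1%N]
    | perm_eq t [:: 0%N; 0%N; 2%N]].

Definition admissible (m : nat) (S : {set tvec m}) : Prop :=
  (forall s s', s \in S -> s' \in S -> s != s' ->
     (exists i, val (s i) == 0%N /\ val (s' i) != 0%N) /\
     (exists j, val (s j) != 0%N /\ val (s' j) == 0%N)) /\
  (forall s s' s'', s \in S -> s' \in S -> s'' \in S ->
     s != s' -> s != s'' -> s' != s'' ->
     exists k, good_triple (s k) (s' k) (s'' k)).

Definition weight (m : nat) (s : tvec m) : nat := #|[set i | val (s i) != 0%N]|.

Definition Asel (n : nat) (A0 A1 A2 : {set F3vec n}) (i : 'I_3) : {set F3vec n} :=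
  if val i == 0%N then A0 else if val i == 1%N then A1 else A2.

(* F_3^{nm} is modelled as m blocks of vectors in F_3^n: {ffun 'I_m -> 'rV_n}. *)
Definition sprod (n m : nat) (A0 A1 A2 : {set F3vec n}) (s : tvec m)
  : {set {ffun 'I_m -> F3vec n}} :=
  [set x : {ffun 'I_m -> F3vec n} | [forall i, x i \in Asel A0 A1 A2 (s i)]].

Definition Sprod (n m : nat) (A0 A1 A2 : {set F3vec n}) (S : {set tvec m})
  : {set {ffun 'I_m -> F3vec n}} :=
  \bigcup_(s in S) sprod A0 A1 A2 s.

(* Main.v *)
Require Import Defs.
From mathcomp Require Import all_boot all_order all_algebra.
Lemma triple0 n (x : 'rV['F_3]_n) : (x + x + x = 0)%R.
Proof.
apply/rowP => j; rewrite !mxE.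
by case: (x ord0 j) => [[|[|[|]]] H] //; apply/val_inj.
Qed.

Lemma card_bigcup_disj (I T : finType) (F : I -> {set T}) (S : {set I}) :
 (forall i j, i \in S -> j \in S -> i != j -> [disjoint F i & F j]) ->
 #|\bigcup_(i in S) F i| = (\sum_(i in S) #|F i|)%N.
Proof.
elim: {S}_.+1 {-2}S (ltnSn #|S|) => // k IH S HS Hd.
case: (set_0Vmem S) => [->|[i Si]]; first by rewrite !big_set0 cards0.
rewrite (big_setD1 i Si) (big_setD1 i Si) /= cardsU IH.
- rewrite (_ : F i :&: _ = set0) ?cards0 ?subn0 //.
  apply/disjoint_setI0; apply/bigcup_disjointP => j.
  rewrite !inE => /andP[ji Sj]; apply: Hd => //.
  by rewrite eq_sym.
- by rewrite (cardsD1 i S) Si add1n ltnS in HS.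
- by move=> a b; rewrite !inE => /andP[_ Sa] /andP[_ Sb]; apply: Hd.
Qed.
Lemma card_sprod n m (A0 A1 A2 : {set 'rV['F_3]_n}) (s : {ffun 'I_m -> 'I_3}) :
  #|sprod A0 A1 A2 s| = (\prod_i #|Asel A0 A1 A2 (s i)|)%N.
Proof.
have -> : sprod A0 A1 A2 s = [set x in family (fun i => mem (Asel A0 A1 A2 (s i)))].
  by apply/setP => x; rewrite !inE; idtac.
by rewrite cardsE card_family foldrE big_map big_enum.
Qed.

Lemma card_sprod2 n m w (A0 A1 A2 : {set 'rV['F_3]_n}) (s : {ffun 'I_m -> 'I_3}) :
  #|A1| = #|A2| -> weight s = w ->
  #|sprod A0 A1 A2 s| = (#|A0| ^ (m - w) * #|A1| ^ w)%N.
Proof.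
move=> e12 ws; rewrite card_sprod (bigID (fun i => val (s i) == 0%N)) /=.
rewrite (eq_bigr (fun _ => #|A0|)); last by move=> i H; rewrite /Asel H.
rewrite [X in (_ * X)%N](eq_bigr (fun _ => #|A1|)); last first.
  by move=> i /negbTE H; rewrite /Asel H; case: ifP.
rewrite !prod_nat_const; congr (_ ^ _ * _ ^ _)%N.
  rewrite -ws /weight.
  have H := cardsC [set i | val (s i) != 0%N]; rewrite card_ord in H.
  have -> : #|[pred i | val (s i) == 0%N]| = #|~: [set i | val (s i) != 0%N]|.
    by apply: eq_card => i; rewrite !inE negbK.
  apply/eqP; rewrite -(eqn_add2l #|[set i | val (s i) != 0%N]|) H subnKC //.
  by rewrite -[X in (_ <= X)%N](card_ord m) max_card.
by rewrite -ws /weight; apply: eq_card => i; rewrite inE.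
Qed.

Theorem lemma2p11 (n m w : nat) (A0 A1 A2 : {set 'rV['F_3]_n})
  (S : {set {ffun 'I_m -> 'I_3}}) :
  extendable A0 A1 A2 -> #|A1| = #|A2| ->
  admissible S -> #|S| = 'C(m, w) ->
  (forall s, s \in S -> weight s = w) ->
  #|Sprod A0 A1 A2 S| = ('C(m, w) * #|A0| ^ (m - w) * #|A1| ^ w)%N.
Proof.
move=> [_ _ _ H1 _] e12 [Hadm _] cS Hw.
rewrite /Sprod card_bigcup_disj.
  rewrite (eq_bigr (fun _ => #|A0| ^ (m - w) * #|A1| ^ w)%N); last first.
    by move=> s Ss; apply: card_sprod2 => //; apply: Hw.
  by rewrite sum_nat_const cS mulnA.
move=> s s' Ss Ss' ne; have [[i [hi hi']] _] := Hadm s s' Ss Ss' ne.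
rewrite -setI_eq0; apply/eqP/setP => x; rewrite !inE.
apply/negbTE/negP => /andP[/forallP/(_ i) a /forallP/(_ i) b].
have a0 : x i \in A0 by move: a; rewrite /Asel hi.
have b0 : x i \in A1 :|: A2.
  by move: b; rewrite /Asel (negbTE hi') inE; case: ifP => _ ->; rewrite ?orbT.
by have := H1 _ _ _ a0 a0 b0; rewrite triple0 eqxx.
Qed.
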